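(* Let $M$ be the monoid defined by the presentation $\langle a,b,x,y \mid bxy=xyb,\ byx=yxb,\ axyb=byxa\rangle$. Then for every $\alpha\in\mathbb{N}$, the elements represented by $a(xy)^\alpha b$ and $b(yx)^\alpha a$ lie in the same connected component of the cyclic shift graph $K(M)$, and the distance between them in $K(M)$ is at least $\alpha-1$. Consequently, although $M$ is multihomogeneous, there is no bound on the diameters of the connected components of $K(M)$.
   Context: For a monoid $M$ and $s,t\in M$, write $s\sim t$ if there exist $x,y\in M$ with $s=xy$ and $t=yx$ (a cyclic shift). The cyclic shift graph $K(M)$ is the undirected graph with vertex set $M$ and an edge between $s$ and $t$ iff $s\sim t$; its connected components are the classes of the reflexive–transitive closure of $\sim$, and distances/diameters are graph distances. A presentation is multihomogeneous if each defining relation $(u,v)$ has $u$ and $v$ containing the same number of occurrences of each generator; a monoid is multihomogeneous if it admits such a presentation. *)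

(* Defs.v *)
From mathcomp Require Import all_boot.
From Stdlib Require Import Relations.
Set Implicit Arguments. Unset Strict Implicit. Unset Printing Implicit Defensive.

Definition letter := 'I_4.
Definition la : letter := @Ordinal 4 0 isT.
Definition lb : letter := @Ordinal 4 1 isT.
Definition lx : letter := @Ordinal 4 2 isT.
Definition ly : letter := @Ordinal 4 3 isT.

Definition word := seq letter.

Definition rels : seq (word * word) :=
  [:: ([:: lb; lx; ly], [:: lx; ly; lb]);
      ([:: lb; ly; lx], [:: ly; lx; lb]);
      ([:: la; lx; ly; lb], [:: lb; ly; lx; la])].

Inductive step : word -> word -> Prop :=
  | step_intro (u v l r : word) :
      (l, r) \in rels -> step (u ++ l ++ v) (u ++ r ++ v).

Definition eqM : word -> word -> Prop := clos_refl_sym_trans word step.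

Definition cshift (s t : word) : Prop :=
  exists p q : word, eqM s (p ++ q) /\ eqM t (q ++ p).

Fixpoint Kpath (n : nat) (s t : word) : Prop :=
  match n with
  | 0 => eqM s t
  | n'.+1 => exists u : word, cshift s u /\ Kpath n' u t
  end.

Definition Kconnected (s t : word) : Prop := exists n, Kpath n s t.

Definition multihomogeneous (R : seq (word * word)) : bool :=
  all (fun p => perm_eq p.1 p.2) R.

Definition w1 (alpha : nat) : word :=
  la :: flatten (nseq alpha [:: lx; ly]) ++ [:: lb].
Definition w2 (alpha : nat) : word :=
  lb :: flatten (nseq alpha [:: ly; lx]) ++ [:: la].

(* Main.v *)
Require Import Defs.
From mathcomp Require Import all_boot all_order all_algebra zify ring.
From Stdlib Require Import Relations.
Set Implicit Arguments. Unset Strict Implicit. Unset Printing Implicit Defensive.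
Import GRing.Theory Num.Theory.

Fixpoint inv (c1 c2 : letter) (w : word) : nat :=
  match w with [::] => 0 | c :: w' => (c == c1) * count_mem c2 w' + inv c1 c2 w' end.

Lemma inv_cat c1 c2 p q : inv c1 c2 (p ++ q) =
  inv c1 c2 p + inv c1 c2 q + count_mem c1 p * count_mem c2 q.
Proof. elim: p => [|c p IH] /=; [lia|]; rewrite IH count_cat; case: (c == c1) => /=; lia. Qed.

Lemma inv_ctx c1 c2 u l r v : (forall c, count_mem c l = count_mem c r) ->
  inv c1 c2 (u ++ l ++ v) + inv c1 c2 r = inv c1 c2 (u ++ r ++ v) + inv c1 c2 l.
Proof. move=> H; rewrite !inv_cat !count_cat !H; lia. Qed.

Definition Phi (al : nat) (w : word) : int :=
  (inv ly lx w)%:Z + (al * inv lx la w)%:Z - (inv lb la w)%:Z - (al * inv ly la w)%:Z.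

Lemma step_cnt s t c : step s t -> count_mem c s = count_mem c t.
Proof.
case=> u v l r; rewrite !inE => /or3P [] /eqP [-> ->];
rewrite !count_cat /=; lia.
Qed.

Lemma Phi_ctx al u l r v : (forall c, count_mem c l = count_mem c r) ->
  Phi al l = Phi al r -> Phi al (u ++ l ++ v) = Phi al (u ++ r ++ v).
Proof.
move=> H; rewrite /Phi.
have H1 := inv_ctx ly lx u v H; have H2 := inv_ctx lx la u v H.
have H3 := inv_ctx lb la u v H; have H4 := inv_ctx ly la u v H.
lia.
Qed.

Lemma step_Phi al s t : step s t -> Phi al s = Phi al t.
Proof.
case=> u v l r; rewrite !inE => /or3P [] /eqP [-> ->]; apply: Phi_ctx;
 try (move=> c; rewrite /=; lia); rewrite /Phi /=; lia.
Qed.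

Lemma eqM_inv (T : Type) (f : word -> T) : (forall s t, step s t -> f s = f t) ->
  forall s t, eqM s t -> f s = f t.
Proof. move=> H s t; elim=> [x y /H | x | x y _ -> | x y z _ -> _ ->] //. Qed.

Lemma rot_Phi al p q : count_mem lx (p ++ q) = al -> count_mem ly (p ++ q) = al ->
  count_mem la (p ++ q) = 1 -> count_mem lb (p ++ q) = 1 ->
  (Phi al (q ++ p) - Phi al (p ++ q) = (count_mem lb p)%:Z - (count_mem la p)%:Z)%R.
Proof.
rewrite /Phi !inv_cat !count_cat.
set xp := count_mem lx p; set xq := count_mem lx q.
set yp := count_mem ly p; set yq := count_mem ly q.
set ap := count_mem la p; set aq := count_mem la q.
set bp := count_mem lb p; set bq := count_mem lb q.
move=> Hx Hy Ha Hb.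
have -> : xq = al - xp by lia.
have -> : yq = al - yp by lia.
have : (ap = 0 /\ aq = 1) \/ (ap = 1 /\ aq = 0) by lia.
have : (bp = 0 /\ bq = 1) \/ (bp = 1 /\ bq = 0) by lia.
have : xp <= al by lia.
have : yp <= al by lia.
clear Hx Hy Ha Hb.
move=> hy hx [[-> ->]|[-> ->]] [[-> ->]|[-> ->]]; nia.
Qed.

Lemma eqM_cnt c s t : eqM s t -> count_mem c s = count_mem c t.
Proof. move=> E; apply: (eqM_inv (f := fun w => count_mem c w)) E => ? ?; exact: step_cnt. Qed.

Lemma eqM_Phi al s t : eqM s t -> Phi al s = Phi al t.
Proof. move=> E; apply: (eqM_inv (f := Phi al)) E => ? ?; exact: step_Phi. Qed.

Lemma Kpath_bound al n s t :
  count_mem lx s = al -> count_mem ly s = al -> count_mem la s = 1 -> count_mem lb s = 1 ->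
  Kpath n s t -> (Phi al t - Phi al s <= n%:Z)%R.
Proof.
elim: n s => [|n IH] s Hx Hy Ha Hb /=.
  by move=> /(eqM_Phi al) ->; rewrite GRing.subrr.
move=> [u [[p [q [E1 E2]]] K]].
have cs : forall c, count_mem c (q ++ p) = count_mem c s.
  by move=> c; rewrite (eqM_cnt c E1) !count_cat addnC.
have cu : forall c, count_mem c u = count_mem c s.
  by move=> c; rewrite (eqM_cnt c E2) cs.
have := IH u; rewrite !cu => /(_ Hx Hy Ha Hb K) H.
have := @rot_Phi al p q; rewrite -!(eqM_cnt _ E1) => /(_ Hx Hy Ha Hb).
rewrite -(eqM_Phi al E1) -(eqM_Phi al E2) => R.
have : count_mem lb p <= 1 by move: Hb; rewrite (eqM_cnt _ E1) count_cat; lia.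
move: H R; lia.
Qed.

Definition s1 n : word := flatten (nseq n [:: lx; ly]).
Definition s2 n : word := flatten (nseq n [:: ly; lx]).

Lemma cnt_s1 n : [/\ count_mem lx (s1 n) = n, count_mem ly (s1 n) = n,
  count_mem la (s1 n) = 0 & count_mem lb (s1 n) = 0].
Proof. elim: n => [|n [h1 h2 h3 h4]] //=; rewrite /s1 /= -/(s1 n); by rewrite h1 h2 h3 h4. Qed.
Lemma cnt_s2 n : [/\ count_mem lx (s2 n) = n, count_mem ly (s2 n) = n,
  count_mem la (s2 n) = 0 & count_mem lb (s2 n) = 0].
Proof. elim: n => [|n [h1 h2 h3 h4]] //=; rewrite /s2 /= -/(s2 n) h1 h2 h3 h4; by split; rewrite ?add0n ?add1n. Qed.

Lemma inv0 c1 c2 w : count_mem c2 w = 0 -> inv c1 c2 w = 0.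
Proof. elim: w => [|c w IH] //= /eqP; rewrite addn_eq0 => /andP [_ /eqP Hw]; by rewrite Hw muln0 IH. Qed.

Lemma inv_s12 n : inv ly lx (s2 n) = inv ly lx (s1 n) + n.
Proof.
elim: n => [|n IH] //; rewrite /s1 /s2 /= -/(s1 n) -/(s2 n).
case: (cnt_s1 n) => h1 _ _ _; case: (cnt_s2 n) => h2 _ _ _; rewrite h1 h2 IH; lia. Qed.


Lemma w1E n : w1 n = la :: s1 n ++ [:: lb]. Proof. by []. Qed.
Lemma w2E n : w2 n = lb :: s2 n ++ [:: la]. Proof. by []. Qed.

Lemma Phi12 n : (Phi n (w2 n) - Phi n (w1 n) = n%:Z - 1)%R.
Proof.
rewrite w1E w2E /Phi /= !inv_cat !count_cat /=.
case: (cnt_s1 n) => h1 h2 h3 h4; case: (cnt_s2 n) => g1 g2 g3 g4.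
rewrite ?(inv0 _ h3) ?(inv0 _ g3) h1 h2 h3 h4 g1 g2 g3 g4 inv_s12.
lia.
Qed.

Lemma eqM_refl s : eqM s s. Proof. exact: rst_refl. Qed.
Lemma eqM_sym s t : eqM s t -> eqM t s. Proof. exact: rst_sym. Qed.
Lemma eqM_trans s t r : eqM s t -> eqM t r -> eqM s r. Proof. exact: rst_trans. Qed.

Lemma eqM_ctx u v s t : eqM s t -> eqM (u ++ s ++ v) (u ++ t ++ v).
Proof.
elim=> [x y [u' v' l r H] | x | x y _ IH | x y z _ IH1 _ IH2].
- apply: rst_step; rewrite !catA -(catA u u') -!catA.
  have -> : u ++ u' ++ l ++ v' ++ v = (u ++ u') ++ l ++ (v' ++ v) by rewrite !catA.
  have -> : u ++ u' ++ r ++ v' ++ v = (u ++ u') ++ r ++ (v' ++ v) by rewrite !catA.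
  exact: step_intro.
- exact: eqM_refl.
- exact: eqM_sym.
- exact: eqM_trans IH2.
Qed.

Lemma eqM_rule u v l r : (l, r) \in rels -> eqM (u ++ l ++ v) (u ++ r ++ v).
Proof. by move=> H; apply: rst_step; apply: step_intro. Qed.

Lemma comm_s1 m t : eqM (s1 m ++ lb :: t) (lb :: s1 m ++ t).
Proof.
elim: m => [|m IH]; first exact: eqM_refl.
rewrite /s1 /= -/(s1 m).
apply: (@eqM_trans _ ([::] ++ [:: lx; ly; lb] ++ (s1 m ++ t))).
  by have := eqM_ctx [:: lx; ly] [::] IH; rewrite !cats0.
apply: eqM_sym; exact: (@eqM_rule [::] (s1 m ++ t) [:: lb; lx; ly] [:: lx; ly; lb] isT).
Qed.

Lemma comm_s2 m t : eqM (s2 m ++ lb :: t) (lb :: s2 m ++ t).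
Proof.
elim: m => [|m IH]; first exact: eqM_refl.
rewrite /s2 /= -/(s2 m).
apply: (@eqM_trans _ ([::] ++ [:: ly; lx; lb] ++ (s2 m ++ t))).
  by have := eqM_ctx [:: ly; lx] [::] IH; rewrite !cats0.
apply: eqM_sym; exact: (@eqM_rule [::] (s2 m ++ t) [:: lb; ly; lx] [:: ly; lx; lb] isT).
Qed.

Lemma s2S k : s2 k ++ [:: ly; lx] = s2 k.+1.
Proof. elim: k => [|k IH] //. change ([:: ly; lx] ++ (s2 k ++ [:: ly; lx]) = [:: ly; lx] ++ s2 k.+1). by rewrite IH. Qed.

Lemma Kpath_eqM_l n s s' t : eqM s s' -> Kpath n s' t -> Kpath n s t.
Proof.
case: n => [|n] /= E; first exact: eqM_trans.
move=> [u [[p [q [E1 E2]]] K]]; exists u; split=> //; exists p, q; split=> //.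
exact: eqM_trans E1.
Qed.

Lemma Kpath_cat n m s t r : Kpath n s t -> Kpath m t r -> Kpath (n + m) s r.
Proof.
elim: n s => [|n IH] s /=; first by move=> E K; exact: Kpath_eqM_l K.
move=> [u [C K]] K2; exists u; split=> //; exact: IH.
Qed.

Lemma Kc_trans s t r : Kconnected s t -> Kconnected t r -> Kconnected s r.
Proof. move=> [n K1] [m K2]; exists (n + m); exact: Kpath_cat K1 K2. Qed.

Lemma Kc_eqM s t : eqM s t -> Kconnected s t.
Proof. by move=> E; exists 0. Qed.

Lemma Kc_sh p q : Kconnected (p ++ q) (q ++ p).
Proof.
exists 1 => /=; exists (q ++ p); split; last exact: eqM_refl.
exists p, q; split; exact: eqM_refl.
Qed.

Definition z k m : word := lb :: s1 m ++ s2 k ++ [:: la].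

Lemma zE k m : z k m = (lb :: s1 m ++ s2 k) ++ [:: la].
Proof. by rewrite /z /= -catA. Qed.

Lemma z_step k m : Kconnected (z k m.+1) (z k.+1 m).
Proof.
apply: (@Kc_trans _ ([:: lb; ly; lx; la] ++ (s1 m ++ s2 k))).
  rewrite zE.
  apply: Kc_trans (Kc_sh _ _) _.
  apply: Kc_eqM.
  change (eqM ([:: la] ++ [:: lb; lx; ly] ++ (s1 m ++ s2 k))
              ([::] ++ [:: lb; ly; lx; la] ++ (s1 m ++ s2 k))).
  apply: (@eqM_trans _ ([::] ++ [:: la; lx; ly; lb] ++ (s1 m ++ s2 k))).
    exact: (eqM_ctx [:: la] (s1 m ++ s2 k) (@eqM_rule [::] [::] [:: lb; lx; ly] [:: lx; ly; lb] isT)).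
  exact: (@eqM_rule [::] _ [:: la; lx; ly; lb] [:: lb; ly; lx; la] isT).
apply: Kc_trans (Kc_sh _ _) _.
apply: Kc_eqM; rewrite /z -s2S -catA /= -!catA /=.
apply: (@eqM_trans _ (s1 m ++ lb :: s2 k ++ [:: ly; lx; la])); last exact: comm_s1.
have := eqM_ctx (s1 m) [::] (comm_s2 k [:: ly; lx; la]); by rewrite !cats0.
Qed.

Lemma z_chain m k : Kconnected (z k m) (z (k + m) 0).
Proof.
elim: m k => [|m IH] k; first by rewrite addn0; apply: Kc_eqM; exact: eqM_refl.
apply: Kc_trans (z_step k m) _; rewrite addnS -addSn; exact: IH.
Qed.

Lemma conn al : Kconnected (w1 al) (w2 al).
Proof.
apply: (@Kc_trans _ (z 0 al)); last first.
  have := z_chain al 0; rewrite add0n /z /= /w2; by [].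
rewrite w1E -cat1s.
apply: Kc_trans (Kc_sh _ _) _; apply: Kc_eqM; rewrite /z /= -catA /=.
exact: comm_s1.
Qed.

Theorem mainTheorem15 :
  (forall alpha : nat,
      Kconnected (w1 alpha) (w2 alpha) /\
      (forall n : nat, Kpath n (w1 alpha) (w2 alpha) -> alpha - 1 <= n)) /\
  multihomogeneous rels /\
  (forall D : nat, exists s t : word,
      Kconnected s t /\ (forall n : nat, Kpath n s t -> D < n)).
Proof.
have lb_ : forall alpha n, Kpath n (w1 alpha) (w2 alpha) -> alpha - 1 <= n.
  move=> al n K.
  case: (cnt_s1 al) => h1 h2 h3 h4.
  have := @Kpath_bound al n (w1 al) (w2 al).
  rewrite w1E /= !count_cat h1 h2 h3 h4 /= => /(_ (addn0 _) (addn0 _) erefl erefl).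
  rewrite -w1E => /(_ K); rewrite Phi12; lia.
split; first by move=> al; split; [exact: conn | exact: lb_].
split; first by [].
move=> D; exists (w1 D.+2), (w2 D.+2); split; first exact: conn.
move=> n /lb_; lia.
Qed.
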